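(* For $\ell\in\mathbb N_0$ and $t\in(0,\pi)$ let $u_{0\ell}(t)=\tfrac1{\sqrt2}\mathscr P_\ell(\cos t)$ and $v_{0\ell}(t)=\tfrac1{\sqrt2}\mathscr Q_\ell(\cos t)$. For sequences $\rho_\ell>0$, $\nu_\ell\in\mathbb R$ ($\ell\in\mathbb N_0$) set $y_\ell=\rho_\ell u_{0\ell}+(\nu_\ell+i\rho_\ell^{-1})v_{0\ell}$ and, for $t_0,t_1\in(0,\pi)$, $$\beta_\ell(t_1,t_0|y_\ell)=i\big(\sin t_1\,\bar y_\ell(t_0)\dot{\bar y}_\ell(t_1)-\sin t_0\,\bar y_\ell(t_1)\dot{\bar y}_\ell(t_0)\big).$$ Then there is no choice of sequences $(\rho_\ell,\nu_\ell)_{\ell\in\mathbb N_0}\in((0,\infty)\times\mathbb R)^{\mathbb N_0}$ such that $\sum_{\ell=0}^\infty|\beta_\ell(t_1,t_0|y_\ell)|^2<\infty$ for all $t_0,t_1\in(0,\pi)$. Equivalently, the classical time evolution of the axially symmetric massless scalar field $\varphi$ on $(0,\pi)\times\mathbb S^2$ with metric $\sin^2t(-dt^2+\gamma)$ ($\gamma$ the round metric) is not unitarily implementable in the Fock quantization defined by any $SO(3)$-invariant complex structure.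
   Context: $\mathscr P_\ell$ and $\mathscr Q_\ell$ are the Legendre functions of the first and second kind (on the cut $(-1,1)$); the bar denotes complex conjugation and dots derivatives with respect to $t$. Each $y_\ell$ solves $\ddot y_\ell+\cot t\,\dot y_\ell+\ell(\ell+1)y_\ell=0$ with Wronskian $\mathrm{Re}y_\ell\,\mathrm{Im}\dot y_\ell-\mathrm{Re}\dot y_\ell\,\mathrm{Im}y_\ell=\tfrac{1}{2\sin t}$; the $SO(3)$-invariant complex structures on the space of axially symmetric solutions are in bijection with the pairs $(\rho_\ell,\nu_\ell)$ (via declaring $y_\ell Y_{\ell0}$ to span the $+i$ eigenspace, $Y_{\ell0}$ the axially symmetric spherical harmonics), and unitary implementability of evolution from $t_0$ to $t_1$ is equivalent to square-summability of $(\beta_\ell(t_1,t_0|y_\ell))_\ell$. *)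

(* Defs.v *)
From Stdlib Require Import Reals.
From Coquelicot Require Import Coquelicot.
Open Scope R_scope.

(* Generic Legendre three-term (Bonnet) recurrence:
   (n+2) f_{n+2}(x) = (2n+3) x f_{n+1}(x) - (n+1) f_n(x),
   started from (f_0, f_1) = (a, b).  legendre_pair a b n x = (f_n(x), f_{n+1}(x)). *)
Fixpoint legendre_pair (a b : R -> R) (n : nat) (x : R) : R * R :=
  match n with
  | O => (a x, b x)
  | S m =>
      let p := legendre_pair a b m x in
      (snd p, ((2 * INR m + 3) * x * snd p - (INR m + 1) * fst p) / (INR m + 2))
  end.

Definition legendreP (l : nat) (x : R) : R :=
  fst (legendre_pair (fun _ => 1) (fun x => x) l x).

(* Ferrers/Legendre function of the second kind on the cut (-1,1):
   Q_0(x) = 1/2 ln((1+x)/(1-x)),  Q_1(x) = x Q_0(x) - 1, same recurrence. *)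
Definition legendreQ0 (x : R) : R := / 2 * ln ((1 + x) / (1 - x)).
Definition legendreQ (l : nat) (x : R) : R :=
  fst (legendre_pair legendreQ0 (fun x => x * legendreQ0 x - 1) l x).

Definition u0 (l : nat) (t : R) : R := / sqrt 2 * legendreP l (cos t).
Definition v0 (l : nat) (t : R) : R := / sqrt 2 * legendreQ l (cos t).

Definition ymode (rho nu : R) (l : nat) (t : R) : C :=
  (RtoC (rho * u0 l t) + (RtoC nu + Ci * RtoC (/ rho)) * RtoC (v0 l t))%C.

Definition Cderiv (f : R -> C) (t : R) : C :=
  (Derive (fun s => fst (f s)) t, Derive (fun s => snd (f s)) t).

Definition beta (y : R -> C) (t1 t0 : R) : C :=
  (Ci * (RtoC (sin t1) * Cconj (y t0) * Cconj (Cderiv y t1)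
         - RtoC (sin t0) * Cconj (y t1) * Cconj (Cderiv y t0)))%C.

(* Main.v *)
Require Import Defs.
From Stdlib Require Import Reals Lra Lia.
From Coquelicot Require Import Coquelicot.
Open Scope R_scope.


Fixpoint dlp (a b da db : R -> R) (n : nat) (x : R) : R * R :=
  match n with
  | O => (da x, db x)
  | S m => (snd (dlp a b da db m x),
            x * snd (dlp a b da db m x) + (INR m + 2) * snd (legendre_pair a b m x))
  end.

Lemma legendre_deriv (a b da db : R -> R) (x : R) :
  is_derive a x (da x) -> is_derive b x (db x) ->
  db x - x * da x = a x -> x * db x - da x = b x ->
  forall n,
   is_derive (fun y => fst (legendre_pair a b n y)) x (fst (dlp a b da db n x)) /\
   is_derive (fun y => snd (legendre_pair a b n y)) x (snd (dlp a b da db n x)) /\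
   snd (dlp a b da db n x) - x * fst (dlp a b da db n x) = (INR n + 1) * fst (legendre_pair a b n x) /\
   x * snd (dlp a b da db n x) - fst (dlp a b da db n x) = (INR n + 1) * snd (legendre_pair a b n x).
Proof.
intros Ha Hb H1 H2 n; induction n as [|m [Df [Ds [I II]]]].
- simpl. split; [exact Ha|]. split; [exact Hb|]. split; lra.
- set (fl := fst (legendre_pair a b m x)) in *.
  set (sl := snd (legendre_pair a b m x)) in *.
  set (fd := fst (dlp a b da db m x)) in *.
  set (sd := snd (dlp a b da db m x)) in *.
  assert (Hm : INR m + 2 <> 0) by (pose proof (pos_INR m); lra).
  simpl fst; simpl snd. fold fl sl fd sd.
  rewrite S_INR.
  split; [exact Ds|].
  split.
  + set (F := fun y => snd (legendre_pair a b m y)) in *.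
    set (G := fun y => fst (legendre_pair a b m y)) in *.
    change (is_derive (fun y => ((2 * INR m + 3) * y * F y - (INR m + 1) * G y) / (INR m + 2)) x
              (x * sd + (INR m + 2) * sl)).
    apply is_derive_ext with (f := fun y => ((2 * INR m + 3) * y * F y - (INR m + 1) * G y) * / (INR m + 2)).
    { intro t; reflexivity. }
    auto_derive.
    * split; [exists sd; exact Ds|]. split; [exists fd; exact Df|]. exact Logic.I.
    * replace (Derive (fun x0 => F x0) x) with sd by (symmetry; apply is_derive_unique; exact Ds).
      replace (Derive (fun x0 => G x0) x) with fd by (symmetry; apply is_derive_unique; exact Df).
      apply Rmult_eq_reg_r with (INR m + 2); [|exact Hm].
      change (F x) with sl. field_simplify; [|exact Hm]. nra.
  + split; [ring|].
    assert (E : (x*x - 1) * sd = (INR m + 1) * x * sl - (INR m + 1) * fl) by (replace ((x*x-1)*sd) with (x*(x*sd - fd) - (sd - x*fd)) by ring; rewrite I, II; ring).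
    apply Rmult_eq_reg_r with (INR m + 2); [|exact Hm].
    field_simplify; [|exact Hm]. nra.
Qed.


Lemma casorati (n : nat) (x : R) :
  (INR n + 1) * (snd (legendre_pair (fun _ => 1) (fun x => x) n x) *
                  fst (legendre_pair legendreQ0 (fun x => x * legendreQ0 x - 1) n x)
               - fst (legendre_pair (fun _ => 1) (fun x => x) n x) *
                  snd (legendre_pair legendreQ0 (fun x => x * legendreQ0 x - 1) n x)) = 1.
Proof.
induction n as [|m IH].
- simpl. ring.
- simpl fst; simpl snd. rewrite S_INR.
  set (fP := fst (legendre_pair (fun _ => 1) (fun x => x) m x)) in *.
  set (sP := snd (legendre_pair (fun _ => 1) (fun x => x) m x)) in *.
  set (fQ := fst (legendre_pair legendreQ0 (fun x => x * legendreQ0 x - 1) m x)) in *.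
  set (sQ := snd (legendre_pair legendreQ0 (fun x => x * legendreQ0 x - 1) m x)) in *.
  assert (Hm : INR m + 2 <> 0) by (pose proof (pos_INR m); lra).
  transitivity ((INR m + 1) * (sP * fQ - fP * sQ)); [field; exact Hm | exact IH].
Qed.

Lemma baseP (x : R) :
  is_derive (fun _ : R => 1) x ((fun _ => 0) x) /\ is_derive (fun x : R => x) x ((fun _ => 1) x) /\
  (fun _ => 1) x - x * (fun _ => 0) x = (fun _ : R => 1) x /\ x * (fun _ => 1) x - (fun _ => 0) x = (fun x : R => x) x.
Proof.
split; [auto_derive; [easy|ring]|]. split; [auto_derive; [easy|ring]|]. split; simpl; ring.
Qed.

Lemma Q0_deriv (x : R) : -1 < x < 1 -> is_derive legendreQ0 x (/ (1 - x*x)).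
Proof.
intros Hx. unfold legendreQ0. auto_derive.
- split; [intro; lra|]. split; [|easy]. apply Rdiv_lt_0_compat; lra.
- field. split; [intro; nra|split; intro; lra].
Qed.

Lemma baseQ (x : R) : -1 < x < 1 ->
  is_derive legendreQ0 x ((fun x => / (1 - x*x)) x) /\
  is_derive (fun x => x * legendreQ0 x - 1) x ((fun x => legendreQ0 x + x / (1 - x*x)) x) /\
  (fun x => legendreQ0 x + x / (1 - x*x)) x - x * (fun x => / (1 - x*x)) x = legendreQ0 x /\
  x * (fun x => legendreQ0 x + x / (1 - x*x)) x - (fun x => / (1 - x*x)) x = x * legendreQ0 x - 1.
Proof.
intros Hx.
assert (H1 : 1 - x*x <> 0) by nra.
split; [exact (Q0_deriv x Hx)|]. split.
- auto_derive.
  + exists (/ (1 - x*x)); exact (Q0_deriv x Hx).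
  + replace (Derive (fun x0 => legendreQ0 x0) x) with (/ (1 - x*x)) by (symmetry; apply is_derive_unique; exact (Q0_deriv x Hx)). field. nra.
- simpl. split; field; exact H1.
Qed.


Lemma comp_cos (F : R -> R) (t dF : R) :
  is_derive F (cos t) dF -> is_derive (fun s => F (cos s)) t (dF * - sin t).
Proof.
intros H.
assert (Hc : is_derive cos t (- sin t)) by (auto_derive; [easy|ring]).
pose proof (is_derive_comp F cos t dF (- sin t) H Hc) as K.
simpl in K. replace (dF * - sin t) with (- sin t * dF) by ring. exact K.
Qed.

Lemma cos_in (t : R) : 0 < t < PI -> -1 < cos t < 1.
Proof.
intros Ht. pose proof (sin_gt_0 t (proj1 Ht) (proj2 Ht)).
pose proof (sin2_cos2 t). unfold Rsqr in *.
pose proof (COS_bound t). split; nra.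
Qed.

Section Mode.
Variables a b da db : R -> R.
Hypothesis Hbase : forall x, -1 < x < 1 ->
  is_derive a x (da x) /\ is_derive b x (db x) /\
  db x - x * da x = a x /\ x * db x - da x = b x.

Definition Ym (n : nat) (t : R) := / sqrt 2 * snd (legendre_pair a b n (cos t)).
Definition Pm (n : nat) (t : R) := - / sqrt 2 * ((INR n + 1) *
   (fst (legendre_pair a b n (cos t)) - cos t * snd (legendre_pair a b n (cos t)))).

Lemma mode_t (n : nat) (t : R) : 0 < t < PI ->
  is_derive (Ym n) t (Pm n t / sin t) /\
  is_derive (Pm n) t (- ((INR n + 1) * (INR n + 2)) * sin t * Ym n t).
Proof.
intros Ht.
pose proof (sin_gt_0 t (proj1 Ht) (proj2 Ht)) as Hs.
pose proof (sin2_cos2 t) as Hsc. unfold Rsqr in Hsc.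
set (x := cos t) in *.
assert (Hx : -1 < x < 1) by (apply cos_in; exact Ht).
destruct (Hbase x Hx) as [Ha [Hb [H1 H2]]].
destruct (legendre_deriv a b da db x Ha Hb H1 H2 n) as [Df [Ds [I II]]].
set (fl := fst (legendre_pair a b n x)) in *.
set (sl := snd (legendre_pair a b n x)) in *.
set (fd := fst (dlp a b da db n x)) in *.
set (sd := snd (dlp a b da db n x)) in *.
assert (E : (1 - x*x) * sd = (INR n + 1) * (fl - x * sl)).
{ replace ((1 - x*x)*sd) with ((sd - x*fd) - x*(x*sd - fd)) by ring. rewrite I, II. ring. }
split.
- unfold Ym.
  apply is_derive_ext with (f := fun s => / sqrt 2 * (fun y => snd (legendre_pair a b n y)) (cos s)).
  { intro; reflexivity. }
  replace (Pm n t / sin t) with (/ sqrt 2 * (sd * - sin t)).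
  + apply (is_derive_scal _ _ (/ sqrt 2) _ (comp_cos (fun y => snd (legendre_pair a b n y)) t sd Ds)).
  + unfold Pm. fold x. fold fl sl. rewrite <- E.
    replace (1 - x*x) with (sin t * sin t) by lra.
    field. repeat split; apply Rgt_not_eq; (exact Hs || (apply sqrt_lt_R0; lra)).
- unfold Pm.
  apply is_derive_ext with (f := fun s => - / sqrt 2 *
     (fun y => (INR n + 1) * (fst (legendre_pair a b n y) - y * snd (legendre_pair a b n y))) (cos s)).
  { intro; reflexivity. }
  assert (Hh : is_derive (fun y => (INR n + 1) * (fst (legendre_pair a b n y) - y * snd (legendre_pair a b n y))) x
                 (- ((INR n + 1) * (INR n + 2)) * sl)).
  { set (F := fun y => fst (legendre_pair a b n y)) in *.
    set (G := fun y => snd (legendre_pair a b n y)) in *.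
    change (is_derive (fun y => (INR n + 1) * (F y - y * G y)) x (- ((INR n + 1) * (INR n + 2)) * sl)).
    auto_derive.
    - split; [exists fd; exact Df|]. split; [exists sd; exact Ds|]. easy.
    - replace (Derive (fun x0 => F x0) x) with fd by (symmetry; apply is_derive_unique; exact Df).
      replace (Derive (fun x0 => G x0) x) with sd by (symmetry; apply is_derive_unique; exact Ds).
      change (G x) with sl. replace fd with (x*sd - (INR n+1)*sl) by lra. ring. }
  replace (- ((INR n + 1) * (INR n + 2)) * sin t * Ym n t) with
     (- / sqrt 2 * (- ((INR n + 1) * (INR n + 2)) * sl * - sin t)).
  + apply (is_derive_scal _ _ (- / sqrt 2) _ (comp_cos _ t _ Hh)).
  + unfold Ym. fold x sl. ring.
Qed.
End Mode.



Lemma mvt_exists (f df : R -> R) (a b : R) : a <= b ->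
  (forall x, a <= x <= b -> is_derive f x (df x)) ->
  exists c, a <= c <= b /\ f b - f a = df c * (b - a).
Proof.
intros Hab HD.
destruct (MVT_gen f a b df) as [c [Hc E]].
- intros x Hx. rewrite Rmin_left in Hx by lra. rewrite Rmax_right in Hx by lra.
  apply HD; lra.
- intros x Hx. rewrite Rmin_left in Hx by lra. rewrite Rmax_right in Hx by lra.
  apply continuity_pt_filterlim. apply (ex_derive_continuous f x).
  exists (df x). apply HD; lra.
- rewrite Rmin_left in Hc by lra. rewrite Rmax_right in Hc by lra.
  exists c. split; assumption.
Qed.

Lemma mvt_bound (f df : R -> R) (a b Kb : R) : a <= b ->
  (forall x, a <= x <= b -> is_derive f x (df x)) ->
  (forall x, a <= x <= b -> Rabs (df x) <= Kb) -> Rabs (f b - f a) <= Kb * (b - a).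
Proof.
intros Hab HD HK. destruct (mvt_exists f df a b Hab HD) as [c [Hc E]].
rewrite E, Rabs_mult, (Rabs_right (b - a)) by lra.
apply Rmult_le_compat_r; [lra|]. apply HK; exact Hc.
Qed.

Lemma mvt_mono (f df : R -> R) (a b : R) : a <= b ->
  (forall x, a <= x <= b -> is_derive f x (df x)) ->
  (forall x, a <= x <= b -> 0 <= df x) -> f a <= f b.
Proof.
intros Hab HD HK. destruct (mvt_exists f df a b Hab HD) as [c [Hc E]].
assert (0 <= df c * (b - a)) by (apply Rmult_le_pos; [apply HK; exact Hc | lra]). lra.
Qed.

Lemma exp_le_mono x y : x <= y -> exp x <= exp y.
Proof. intros H. destruct (Rle_lt_or_eq_dec x y H) as [H'|H']; [left; apply exp_increasing; exact H' | subst; lra]. Qed.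

Lemma sin_PI10_pos : 0 < sin (PI / 10).
Proof. pose proof PI_RGT_0. apply sin_gt_0; lra. Qed.

Lemma sin_ge_PI10 t : PI / 10 <= t <= PI / 2 -> sin (PI / 10) <= sin t.
Proof. intros Ht. pose proof PI_RGT_0. apply sin_incr_1; lra. Qed.

Definition Mq := / (4 * sin (PI / 10) ^ 2).

Lemma Mq_pos : 0 < Mq.
Proof. unfold Mq. pose proof sin_PI10_pos. apply Rinv_0_lt_compat. apply Rmult_lt_0_compat; [lra|]. apply pow_lt; lra. Qed.

Section ODE.
Variables (Y Pp : R -> R) (om : R).
Hypothesis Hom : 1 <= om.
Hypothesis HY : forall t, 0 < t < PI -> is_derive Y t (Pp t / sin t).
Hypothesis HP : forall t, 0 < t < PI -> is_derive Pp t (- (om ^ 2 - / 4) * sin t * Y t).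

Definition w1 t := sqrt (sin t) * Y t.
Definition w2 t := (Pp t + cos t / 2 * Y t) / sqrt (sin t).

Lemma w1_deriv t : 0 < t < PI -> is_derive w1 t (w2 t).
Proof.
intros Ht. pose proof (sin_gt_0 t (proj1 Ht) (proj2 Ht)) as Hs.
pose proof (HY t Ht) as DY.
unfold w1. auto_derive.
- split; [exact Hs|]. split; [exists (Pp t / sin t); exact DY|easy].
- replace (Derive (fun x => Y x) t) with (Pp t / sin t) by (symmetry; apply is_derive_unique; exact DY).
  unfold w2. set (r := sqrt (sin t)).
  assert (Hr : 0 < r) by (apply sqrt_lt_R0; exact Hs).
  assert (E : sin t = r * r) by (unfold r; rewrite sqrt_sqrt; lra).
  rewrite E. field. lra.
Qed.

Lemma w2_deriv t : 0 < t < PI -> is_derive w2 t (- (om ^ 2 + / (4 * sin t ^ 2)) * w1 t).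
Proof.
intros Ht. pose proof (sin_gt_0 t (proj1 Ht) (proj2 Ht)) as Hs.
pose proof (HY t Ht) as DY. pose proof (HP t Ht) as DP.
pose proof (sin2_cos2 t) as Hsc. unfold Rsqr in Hsc.
unfold w2. auto_derive.
- repeat split; try (exact Hs); [exists (- (om ^ 2 - / 4) * sin t * Y t); exact DP| exists (Pp t / sin t); exact DY | ].
  apply Rgt_not_eq, sqrt_lt_R0; exact Hs.
- replace (Derive (fun x => Y x) t) with (Pp t / sin t) by (symmetry; apply is_derive_unique; exact DY).
  replace (Derive (fun x => Pp x) t) with (- (om ^ 2 - / 4) * sin t * Y t) by (symmetry; apply is_derive_unique; exact DP).
  unfold w1. set (r := sqrt (sin t)).
  assert (Hr : 0 < r) by (apply sqrt_lt_R0; exact Hs).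
  assert (E : sin t = r * r) by (unfold r; rewrite sqrt_sqrt; lra).
  assert (Ec : cos t * cos t = 1 - r*r*(r*r)) by (rewrite <- E; lra).
  rewrite E. field_simplify; [|lra|lra]. replace (cos t ^ 2) with (cos t * cos t) by ring. rewrite Ec. field. lra.
Qed.

Definition ph t := om * (t - PI / 2).
Definition z1 t := cos (ph t) * w1 t - sin (ph t) * w2 t / om.
Definition z2 t := sin (ph t) * w1 t + cos (ph t) * w2 t / om.
Definition Nz t := z1 t ^ 2 + z2 t ^ 2.
Definition qf t := / (4 * sin t ^ 2).

Lemma z1_deriv t : 0 < t < PI -> is_derive z1 t (sin (ph t) * qf t * w1 t / om).
Proof.
intros Ht. pose proof (w1_deriv t Ht) as D1. pose proof (w2_deriv t Ht) as D2.
pose proof (sin_gt_0 t (proj1 Ht) (proj2 Ht)) as Hs.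
unfold z1, ph. auto_derive.
- repeat split; [exists (w2 t); exact D1 | exists (- (om ^ 2 + / (4 * sin t ^ 2)) * w1 t); exact D2].
- replace (Derive (fun x => w1 x) t) with (w2 t) by (symmetry; apply is_derive_unique; exact D1).
  replace (Derive (fun x => w2 x) t) with (- (om ^ 2 + / (4 * sin t ^ 2)) * w1 t) by (symmetry; apply is_derive_unique; exact D2).
  unfold qf, ph. replace (t + - (PI / 2)) with (t - PI / 2) by ring. field. repeat split; first [apply Rgt_not_eq; apply pow_lt; exact Hs | intro; lra].
Qed.

Lemma z2_deriv t : 0 < t < PI -> is_derive z2 t (- cos (ph t) * qf t * w1 t / om).
Proof.
intros Ht. pose proof (w1_deriv t Ht) as D1. pose proof (w2_deriv t Ht) as D2.
pose proof (sin_gt_0 t (proj1 Ht) (proj2 Ht)) as Hs.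
unfold z2, ph. auto_derive.
- repeat split; [exists (w2 t); exact D1 | exists (- (om ^ 2 + / (4 * sin t ^ 2)) * w1 t); exact D2].
- replace (Derive (fun x => w1 x) t) with (w2 t) by (symmetry; apply is_derive_unique; exact D1).
  replace (Derive (fun x => w2 x) t) with (- (om ^ 2 + / (4 * sin t ^ 2)) * w1 t) by (symmetry; apply is_derive_unique; exact D2).
  unfold qf, ph. replace (t + - (PI / 2)) with (t - PI / 2) by ring. field. repeat split; first [apply Rgt_not_eq; apply pow_lt; exact Hs | intro; lra].
Qed.

Lemma w1_z t : w1 t = cos (ph t) * z1 t + sin (ph t) * z2 t.
Proof.
unfold z1, z2. pose proof (sin2_cos2 (ph t)) as H. unfold Rsqr in H.
transitivity ((sin (ph t) * sin (ph t) + cos (ph t) * cos (ph t)) * w1 t); [rewrite H; ring|field; lra].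
Qed.

Lemma Nz_deriv t : 0 < t < PI ->
  is_derive Nz t (2 * z1 t * (sin (ph t) * qf t * w1 t / om) + 2 * z2 t * (- cos (ph t) * qf t * w1 t / om)).
Proof.
intros Ht. pose proof (z1_deriv t Ht) as D1. pose proof (z2_deriv t Ht) as D2.
unfold Nz. auto_derive.
- repeat split; [exists (sin (ph t) * qf t * w1 t / om); exact D1 | exists (- cos (ph t) * qf t * w1 t / om); exact D2].
- replace (Derive (fun x => z1 x) t) with (sin (ph t) * qf t * w1 t / om) by (symmetry; apply is_derive_unique; exact D1).
  replace (Derive (fun x => z2 x) t) with (- cos (ph t) * qf t * w1 t / om) by (symmetry; apply is_derive_unique; exact D2).
  ring.
Qed.

Lemma Nz_deriv_lb t : 0 < t < PI ->
  - (qf t / om) * Nz t <= 2 * z1 t * (sin (ph t) * qf t * w1 t / om) + 2 * z2 t * (- cos (ph t) * qf t * w1 t / om).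
Proof.
intros Ht. pose proof (sin_gt_0 t (proj1 Ht) (proj2 Ht)) as Hs.
assert (Hq : 0 < qf t / om).
{ unfold qf. apply Rdiv_lt_0_compat; [|lra]. apply Rinv_0_lt_compat. apply Rmult_lt_0_compat; [lra|]. apply pow_lt; exact Hs. }
set (S := sin (ph t)) in *. set (C := cos (ph t)) in *.
pose proof (sin2_cos2 (ph t)) as H. unfold Rsqr in H. fold S C in H.
assert (Ew : w1 t = C * z1 t + S * z2 t) by apply w1_z.
set (a := w1 t) in *. set (x := z1 t) in *. set (y := z2 t) in *.
unfold Nz. fold x y.
assert (E1 : 2 * x * (S * qf t * a / om) + 2 * y * (- C * qf t * a / om) = (qf t / om) * (2 * a * (S * x - C * y))) by (field; lra).
rewrite E1.
assert (E2 : x ^ 2 + y ^ 2 = a * a + (S * x - C * y) * (S * x - C * y)).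
{ rewrite Ew. transitivity ((S * S + C * C) * (x * x + y * y)); [rewrite H; ring | ring]. }
rewrite E2.
set (b := S * x - C * y).
assert (Hab : 0 <= (qf t / om) * ((a + b) * (a + b))) by (apply Rmult_le_pos; [lra | apply Rle_0_sqr]).
lra.
Qed.

Lemma qf_le t : PI / 10 <= t <= PI / 2 -> qf t <= Mq.
Proof.
intros Ht. pose proof sin_PI10_pos. pose proof (sin_ge_PI10 t Ht).
unfold qf, Mq. apply Rinv_le_contravar.
- apply Rmult_lt_0_compat; [lra|]. apply pow_lt; lra.
- apply Rmult_le_compat_l; [lra|]. apply pow_incr; lra.
Qed.

Lemma qf_pos t : 0 < t < PI -> 0 < qf t.
Proof.
intros Ht. pose proof (sin_gt_0 t (proj1 Ht) (proj2 Ht)) as Hs.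
unfold qf. apply Rinv_0_lt_compat. apply Rmult_lt_0_compat; [lra|]. apply pow_lt; lra.
Qed.

Lemma w1_sq_le t : w1 t ^ 2 <= Nz t.
Proof.
pose proof (sin2_cos2 (ph t)) as H. unfold Rsqr in H.
rewrite (w1_z t). unfold Nz.
set (S := sin (ph t)) in *. set (C := cos (ph t)) in *.
assert (E : z1 t ^ 2 + z2 t ^ 2 = (C * z1 t + S * z2 t) ^ 2 + (S * z1 t - C * z2 t) ^ 2).
{ transitivity ((S * S + C * C) * (z1 t ^ 2 + z2 t ^ 2)); [rewrite H; ring | ring]. }
rewrite E. pose proof (pow2_ge_0 (S * z1 t - C * z2 t)). lra.
Qed.

Lemma in_0PI t : PI / 10 <= t <= PI / 2 -> 0 < t < PI.
Proof. pose proof PI_RGT_0. lra. Qed.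

Lemma N_bound t : PI / 10 <= t <= PI / 2 -> Nz t <= Nz (PI / 2) * exp Mq ^ 2.
Proof.
intros Ht. pose proof Mq_pos as HM.
set (K := Mq / om).
assert (HK : 0 < K) by (unfold K; apply Rdiv_lt_0_compat; lra).
assert (HKM : K <= Mq).
{ unfold K. apply Rmult_le_reg_r with om; [lra|]. field_simplify; [|lra]. nra. }
pose (g := fun x => Nz x * exp (K * x)).
pose (dg := fun x => (2 * z1 x * (sin (ph x) * qf x * w1 x / om) + 2 * z2 x * (- cos (ph x) * qf x * w1 x / om)) * exp (K * x) + Nz x * (K * exp (K * x))).
assert (Hmono : g t <= g (PI / 2)).
{ apply (mvt_mono g dg t (PI / 2)); [lra| |].
  - intros x Hx. assert (Hx0 : 0 < x < PI) by (apply in_0PI; lra).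
    pose proof (Nz_deriv x Hx0) as DN. unfold g, dg. auto_derive.
    + exists (2 * z1 x * (sin (ph x) * qf x * w1 x / om) + 2 * z2 x * (- cos (ph x) * qf x * w1 x / om)); exact DN.
    + replace (Derive (fun x0 => Nz x0) x) with (2 * z1 x * (sin (ph x) * qf x * w1 x / om) + 2 * z2 x * (- cos (ph x) * qf x * w1 x / om)) by (symmetry; apply is_derive_unique; exact DN).
      ring.
  - intros x Hx. assert (Hx0 : 0 < x < PI) by (apply in_0PI; lra).
    pose proof (Nz_deriv_lb x Hx0) as L. assert (Q : qf x <= Mq) by (apply qf_le; lra). pose proof (qf_pos x Hx0) as Qp.
    assert (HN : 0 <= Nz x) by (unfold Nz; pose proof (pow2_ge_0 (z1 x)); pose proof (pow2_ge_0 (z2 x)); lra).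
    assert (Hq : qf x / om <= K) by (unfold K; apply Rmult_le_compat_r; [apply Rlt_le, Rinv_0_lt_compat; lra | exact Q]).
    unfold dg. rewrite <- Rmult_assoc, <- Rmult_plus_distr_r. apply Rmult_le_pos; [|apply Rlt_le, exp_pos].
    nra. }
unfold g in Hmono.
assert (E : Nz t <= Nz (PI / 2) * exp (K * (PI / 2 - t))).
{ apply Rmult_le_reg_r with (exp (K * t)); [apply exp_pos|].
  rewrite Rmult_assoc, <- exp_plus. replace (K * (PI / 2 - t) + K * t) with (K * (PI / 2)) by ring. exact Hmono. }
apply Rle_trans with (1 := E).
assert (HN : 0 <= Nz (PI/2)) by (unfold Nz; pose proof (pow2_ge_0 (z1 (PI/2))); pose proof (pow2_ge_0 (z2 (PI/2))); lra).
apply Rmult_le_compat_l; [exact HN|].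
replace (exp Mq ^ 2) with (exp (Mq + Mq)) by (rewrite exp_plus; ring).
apply exp_le_mono. pose proof PI_4. nra.
Qed.

Lemma z_bound (R0 : R) : 0 <= R0 -> Nz (PI / 2) <= R0 ^ 2 ->
  Rabs (z1 (PI / 2) - z1 (PI / 10)) <= 2 * Mq * exp Mq * R0 / om /\
  Rabs (z2 (PI / 2) - z2 (PI / 10)) <= 2 * Mq * exp Mq * R0 / om.
Proof.
intros HR HN0. pose proof Mq_pos as HM. pose proof PI_RGT_0. pose proof PI_4.
assert (Hw : forall x, PI / 10 <= x <= PI / 2 -> Rabs (w1 x) <= exp Mq * R0).
{ intros x Hx. pose proof (N_bound x Hx) as NB. pose proof (w1_sq_le x) as W.
  pose proof (exp_pos Mq) as He.
  assert (w1 x ^ 2 <= (exp Mq * R0) ^ 2).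
  { apply Rle_trans with (Nz x); [exact W|]. apply Rle_trans with (1 := NB).
    replace ((exp Mq * R0) ^ 2) with (R0 ^ 2 * exp Mq ^ 2) by ring.
    apply Rmult_le_compat_r; [apply pow2_ge_0 | exact HN0]. }
  apply Rabs_le. assert (0 <= exp Mq * R0) by (apply Rmult_le_pos; lra). nra. }
assert (Hc : forall x, PI / 10 <= x <= PI / 2 -> forall T, Rabs T <= 1 ->
          Rabs (T * qf x * w1 x / om) <= Mq / om * exp Mq * R0).
{ intros x Hx T HT. assert (Hx0 : 0 < x < PI) by (apply in_0PI; lra).
  pose proof (qf_le x Hx). pose proof (qf_pos x Hx0). pose proof (Hw x Hx).
  unfold Rdiv. rewrite !Rabs_mult. rewrite (Rabs_right (qf x)) by lra.
  rewrite (Rabs_right (/ om)) by (apply Rle_ge, Rlt_le, Rinv_0_lt_compat; lra).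
  assert (0 < / om) by (apply Rinv_0_lt_compat; lra).
  pose proof (Rabs_pos T). pose proof (Rabs_pos (w1 x)).
  replace (Mq * / om * exp Mq * R0) with (1 * Mq * (exp Mq * R0) * / om) by ring.
  apply Rmult_le_compat_r; [lra|].
  apply Rmult_le_compat; try nra. }
assert (Hlen : (PI / 2 - PI / 10) <= 2) by lra.
assert (HK : 0 <= Mq / om * exp Mq * R0) by (apply Rmult_le_pos; [apply Rmult_le_pos; [apply Rlt_le, Rdiv_lt_0_compat; lra | apply Rlt_le, exp_pos] | exact HR]).
split.
- apply Rle_trans with (Mq / om * exp Mq * R0 * (PI / 2 - PI / 10)).
  + apply (mvt_bound z1 (fun x => sin (ph x) * qf x * w1 x / om)); [lra| |].
    * intros x Hx. apply z1_deriv. apply in_0PI; lra.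
    * intros x Hx. apply Hc; [exact Hx|]. apply Rabs_le. pose proof (SIN_bound (ph x)). lra.
  + replace (2 * Mq * exp Mq * R0 / om) with (Mq / om * exp Mq * R0 * 2) by (field; lra).
    apply Rmult_le_compat_l; lra.
- apply Rle_trans with (Mq / om * exp Mq * R0 * (PI / 2 - PI / 10)).
  + apply (mvt_bound z2 (fun x => - cos (ph x) * qf x * w1 x / om)); [lra| |].
    * intros x Hx. apply z2_deriv. apply in_0PI; lra.
    * intros x Hx. apply Hc; [exact Hx|]. apply Rabs_le. pose proof (COS_bound (ph x)). lra.
  + replace (2 * Mq * exp Mq * R0 / om) with (Mq / om * exp Mq * R0 * 2) by (field; lra).
    apply Rmult_le_compat_l; lra.
Qed.

Lemma asym (R0 : R) : 0 <= R0 -> Y (PI / 2) ^ 2 + (Pp (PI / 2) / om) ^ 2 <= R0 ^ 2 ->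
  cos (ph (PI / 10)) = -1 -> sin (ph (PI / 10)) = 0 ->
  Rabs (w1 (PI / 10) + Y (PI / 2)) <= 2 * Mq * exp Mq * R0 / om /\
  Rabs (w2 (PI / 10) / om + Pp (PI / 2) / om) <= 2 * Mq * exp Mq * R0 / om.
Proof.
intros HR H0 Hc Hs.
assert (Hph : ph (PI / 2) = 0) by (unfold ph; ring).
assert (E1 : z1 (PI / 2) = Y (PI / 2)).
{ unfold z1, w1. rewrite Hph, cos_0, sin_0, sin_PI2, sqrt_1. field. lra. }
assert (E2 : z2 (PI / 2) = Pp (PI / 2) / om).
{ unfold z2, w2. rewrite Hph, cos_0, sin_0, sin_PI2, cos_PI2, sqrt_1. field. lra. }
assert (HN : Nz (PI / 2) <= R0 ^ 2) by (unfold Nz; rewrite E1, E2; exact H0).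
destruct (z_bound R0 HR HN) as [B1 B2].
assert (F1 : z1 (PI / 10) = - w1 (PI / 10)) by (unfold z1; rewrite Hc, Hs; field; lra).
assert (F2 : z2 (PI / 10) = - (w2 (PI / 10) / om)) by (unfold z2; rewrite Hc, Hs; field; lra).
rewrite E1, F1 in B1. rewrite E2, F2 in B2.
split.
- replace (w1 (PI / 10) + Y (PI / 2)) with (Y (PI / 2) - - w1 (PI / 10)) by ring. exact B1.
- replace (w2 (PI / 10) / om + Pp (PI / 2) / om) with (Pp (PI / 2) / om - - (w2 (PI / 10) / om)) by ring. exact B2.
Qed.
End ODE.


Lemma ymode_fst rho nu l s : fst (ymode rho nu l s) = rho * u0 l s + nu * v0 l s.
Proof. unfold ymode. simpl. ring. Qed.
Lemma ymode_snd rho nu l s : snd (ymode rho nu l s) = / rho * v0 l s.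
Proof. unfold ymode. simpl. ring. Qed.

Lemma Cmod_sq (z : C) : Cmod z ^ 2 = fst z ^ 2 + snd z ^ 2.
Proof. unfold Cmod. rewrite pow2_sqrt; [reflexivity|]. pose proof (pow2_ge_0 (fst z)). pose proof (pow2_ge_0 (snd z)). lra. Qed.

Lemma beta_sq (y : R -> C) (t1 t0 f0 g0 F0 G0 f1 g1 F1 G1 : R) :
  sin t0 <> 0 -> sin t1 <> 0 -> y t0 = (f0, g0) -> y t1 = (f1, g1) ->
  Cderiv y t0 = (F0 / sin t0, G0 / sin t0) -> Cderiv y t1 = (F1 / sin t1, G1 / sin t1) ->
  Cmod (beta y t1 t0) ^ 2 =
   (f0 * F1 - g0 * G1 - f1 * F0 + g1 * G0) ^ 2 + (f0 * G1 + g0 * F1 - f1 * G0 - g1 * F0) ^ 2.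
Proof.
intros H0 H1 Y0 Y1 D0 D1.
unfold beta. rewrite Y0, Y1, D0, D1. rewrite Cmod_sq.
simpl. field. split; assumption.
Qed.

Lemma key_ineq (rho nu u0 pu0 v0 pv0 u1 pu1 v1 pv1 : R) : rho <> 0 ->
  let f0 := rho * u0 + nu * v0 in let g0 := / rho * v0 in
  let F0 := rho * pu0 + nu * pv0 in let G0 := / rho * pv0 in
  let f1 := rho * u1 + nu * v1 in let g1 := / rho * v1 in
  let F1 := rho * pu1 + nu * pv1 in let G1 := / rho * pv1 in
  (pv0 * u1 - pu0 * v1 - v0 * pu1 + u0 * pv1) ^ 2 - 4 * (u0 * pv0 - v0 * pu0) * (u1 * pv1 - v1 * pu1)
  <= (f0 * F1 - g0 * G1 - f1 * F0 + g1 * G0) ^ 2 + (f0 * G1 + g0 * F1 - f1 * G0 - g1 * F0) ^ 2.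
Proof.
intros Hr f0 g0 F0 G0 f1 g1 F1 G1.
set (Buu := u0 * pu1 - u1 * pu0). set (Bvv := v0 * pv1 - v1 * pv0).
set (Buv := u0 * pv1 - u1 * pv0). set (Bvu := v0 * pu1 - v1 * pu0).
assert (E : (f0 * F1 - g0 * G1 - f1 * F0 + g1 * G0) ^ 2 + (f0 * G1 + g0 * F1 - f1 * G0 - g1 * F0) ^ 2
   = (rho * rho * Buu + rho * nu * (Buv + Bvu) + nu * nu * Bvv + Bvv / (rho * rho)) ^ 2
     + ((Buv + Bvu) ^ 2 - 4 * Buu * Bvv)).
{ unfold f0, g0, F0, G0, f1, g1, F1, G1, Buu, Bvv, Buv, Bvu. field. exact Hr. }
rewrite E.
assert (E2 : (Buv + Bvu) ^ 2 - 4 * Buu * Bvv = (pv0 * u1 - pu0 * v1 - v0 * pu1 + u0 * pv1) ^ 2 - 4 * (u0 * pv0 - v0 * pu0) * (u1 * pv1 - v1 * pu1)).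
{ unfold Buu, Bvv, Buv, Bvu. ring. }
rewrite E2. pose proof (pow2_ge_0 (rho * rho * Buu + rho * nu * (Buv + Bvu) + nu * nu * Bvv + Bvv / (rho * rho))). lra.
Qed.


Lemma lin_sol (Y1 P1 Y2 P2 : R -> R) (om al be : R) :
  (forall t, 0 < t < PI -> is_derive Y1 t (P1 t / sin t)) ->
  (forall t, 0 < t < PI -> is_derive P1 t (- (om ^ 2 - / 4) * sin t * Y1 t)) ->
  (forall t, 0 < t < PI -> is_derive Y2 t (P2 t / sin t)) ->
  (forall t, 0 < t < PI -> is_derive P2 t (- (om ^ 2 - / 4) * sin t * Y2 t)) ->
  (forall t, 0 < t < PI -> is_derive (fun s => al * Y1 s + be * Y2 s) t ((al * P1 t + be * P2 t) / sin t)) /\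
  (forall t, 0 < t < PI -> is_derive (fun s => al * P1 s + be * P2 s) t (- (om ^ 2 - / 4) * sin t * (al * Y1 t + be * Y2 t))).
Proof.
intros A1 B1 A2 B2. split; intros t Ht.
- pose proof (sin_gt_0 t (proj1 Ht) (proj2 Ht)) as Hs.
  pose proof (is_derive_plus _ _ _ _ _ (is_derive_scal _ _ al _ (A1 t Ht)) (is_derive_scal _ _ be _ (A2 t Ht))) as H.
  eapply is_derive_ext; [|eapply is_derive_ext_loc; [apply filter_forall; intro; reflexivity|]].
  2: { replace ((al * P1 t + be * P2 t) / sin t) with (plus (al * (P1 t / sin t)) (be * (P2 t / sin t))). exact H.
       unfold plus; simpl. field. lra. }
  intro; reflexivity.
- pose proof (is_derive_plus _ _ _ _ _ (is_derive_scal _ _ al _ (B1 t Ht)) (is_derive_scal _ _ be _ (B2 t Ht))) as H.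
  replace (- (om ^ 2 - / 4) * sin t * (al * Y1 t + be * Y2 t)) with (plus (al * (- (om ^ 2 - / 4) * sin t * Y1 t)) (be * (- (om ^ 2 - / 4) * sin t * Y2 t))).
  + exact H.
  + unfold plus; simpl. ring.
Qed.

Lemma trace_bound (u pu v pv : R -> R) (om : R) :
  1 <= om ->
  (forall t, 0 < t < PI -> is_derive u t (pu t / sin t)) ->
  (forall t, 0 < t < PI -> is_derive pu t (- (om ^ 2 - / 4) * sin t * u t)) ->
  (forall t, 0 < t < PI -> is_derive v t (pv t / sin t)) ->
  (forall t, 0 < t < PI -> is_derive pv t (- (om ^ 2 - / 4) * sin t * v t)) ->
  cos (ph om (PI / 10)) = -1 -> sin (ph om (PI / 10)) = 0 ->
  let K0 := u (PI/2) * pv (PI/2) - v (PI/2) * pu (PI/2) in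
  K0 <> 0 ->
  let r := sqrt (sin (PI / 10)) in
  (pv (PI/2) * u (PI/10) - pu (PI/2) * v (PI/10) - v (PI/2) * pu (PI/10) + u (PI/2) * pv (PI/10)) / K0
   <= - (/ r + r) + 2 * Mq * exp Mq * (2 / r + r) / om.
Proof.
intros Hom HYu HPu HYv HPv Hc Hs K0 HK r.
set (u0 := u (PI/2)) in *. set (pu0 := pu (PI/2)) in *. set (v0 := v (PI/2)) in *. set (pv0 := pv (PI/2)) in *.
destruct (lin_sol u pu v pv om (pv0 / K0) (- pu0 / K0) HYu HPu HYv HPv) as [HYU HPU].
destruct (lin_sol u pu v pv om (- v0 / K0) (u0 / K0) HYu HPu HYv HPv) as [HYV HPV].
set (U := fun s => pv0 / K0 * u s + - pu0 / K0 * v s) in *.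
set (PU := fun s => pv0 / K0 * pu s + - pu0 / K0 * pv s) in *.
set (V := fun s => - v0 / K0 * u s + u0 / K0 * v s) in *.
set (PV := fun s => - v0 / K0 * pu s + u0 / K0 * pv s) in *.
set (D := 2 * Mq * exp Mq).
assert (HD : 0 < D) by (unfold D; pose proof Mq_pos; pose proof (exp_pos Mq); nra).
assert (U0 : U (PI/2) = 1) by (unfold U; fold u0 v0; unfold K0; field; exact HK).
assert (PU0 : PU (PI/2) = 0) by (unfold PU; fold pu0 pv0; field; exact HK).
assert (V0 : V (PI/2) = 0) by (unfold V; fold u0 v0; field; exact HK).
assert (PV0 : PV (PI/2) = 1) by (unfold PV; fold pu0 pv0; unfold K0; field; exact HK).
destruct (asym U PU om Hom HYU HPU 1 ltac:(lra)) as [BU _].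
{ rewrite U0, PU0. unfold Rdiv. rewrite Rmult_0_l. lra. }
{ exact Hc. } { exact Hs. }
assert (Hom0 : 0 < / om) by (apply Rinv_0_lt_compat; lra).
destruct (asym V PV om Hom HYV HPV (/ om) ltac:(lra)) as [BV1 BV2].
{ rewrite V0, PV0. unfold Rdiv. rewrite Rmult_1_l. lra. }
{ exact Hc. } { exact Hs. }
rewrite U0 in BU. rewrite V0 in BV1. rewrite PV0 in BV2. fold D in BU, BV1, BV2.
pose proof sin_PI10_pos as Hs1.
assert (Hr : 0 < r) by (unfold r; apply sqrt_lt_R0; exact Hs1).
assert (Er : sin (PI/10) = r * r) by (unfold r; rewrite sqrt_sqrt; lra).
unfold w1 in BU, BV1. unfold w2 in BV2. fold r in BU, BV1, BV2.
assert (Etr : (pv0 * u (PI/10) - pu0 * v (PI/10) - v0 * pu (PI/10) + u0 * pv (PI/10)) / K0 = U (PI/10) + PV (PI/10)).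
{ unfold U, PV. field. exact HK. }
rewrite Etr.
set (a := U (PI/10)) in *. set (b := V (PI/10)) in *. set (c := PV (PI/10)) in *.
set (cc := cos (PI/10)) in *.
assert (Hcc : -1 <= cc <= 1) by apply COS_bound.
apply Rabs_le_between in BU. apply Rabs_le_between in BV1. apply Rabs_le_between in BV2.
set (e := / om) in *.
assert (He1 : e <= 1) by (unfold e; rewrite <- Rinv_1; apply Rinv_le_contravar; lra).
replace (D * 1 / om) with (D * e) in BU by (unfold e; field; lra).
replace (D * e / om) with (D * e * e) in BV1, BV2 by (unfold e; field; lra).
replace ((c + cc / 2 * b) / r / om + 1 / om) with (e * ((c + cc / 2 * b) / r + 1)) in BV2 by (unfold e; field; lra).
replace (r * b + 0) with (r * b) in BV1 by ring.
set (X := r * a + 1) in *. set (Z := (c + cc / 2 * b) / r + 1) in *. set (W := r * b) in *.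
assert (Ea : a = X / r - / r) by (unfold X; field; lra).
assert (Ec : c = r * Z - r - cc / 2 * (W / r)) by (unfold Z, W; field; lra).
rewrite Ea, Ec.
assert (HZ : - (D * e) <= Z <= D * e).
{ split; apply Rmult_le_reg_l with e; try lra; nra. }
assert (HW : - (D * e) <= W <= D * e) by nra.
assert (Hrinv : 0 < / r) by (apply Rinv_0_lt_compat; lra).
replace (2 * Mq * exp Mq * (2 / r + r) / om) with (D * e * (2 / r + r)) by (unfold D, e; field; lra).
assert (T1 : X / r <= D * e / r) by (unfold Rdiv; apply Rmult_le_compat_r; lra).
assert (T2 : r * Z <= r * (D * e)) by (apply Rmult_le_compat_l; lra).
assert (HDe : 0 <= D * e) by (apply Rmult_le_pos; lra).
assert (HcW : Rabs (cc * W) <= D * e).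
{ rewrite Rabs_mult. assert (Rabs cc <= 1) by (apply Rabs_le; lra).
  assert (Rabs W <= D * e) by (apply Rabs_le; lra).
  pose proof (Rabs_pos cc). pose proof (Rabs_pos W).
  replace (D * e) with (1 * (D * e)) by ring. apply Rmult_le_compat; lra. }
apply Rabs_le_between in HcW.
assert (T3 : - (cc / 2 * (W / r)) <= D * e / r).
{ replace (- (cc / 2 * (W / r))) with ((- (cc * W) / 2) * / r) by (field; lra).
  unfold Rdiv. apply Rmult_le_compat_r; lra. }
replace (D * (2 / r + r) / om) with (D * e / r + r * (D * e) + D * e / r) by (unfold e; field; lra). lra.
Qed.

From Stdlib Require Import ZArith.

Lemma nat_unbounded (x : R) : exists N : nat, x < INR N.
Proof.
destruct (archimed x) as [H1 H2].
destruct (ZArith_dec.Z_lt_le_dec (up x) 0) as [Hn|Hp].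
- exists O. simpl. apply IZR_lt in Hn. lra.
- exists (Z.to_nat (up x)). rewrite INR_IZR_INZ, Z2Nat.id by exact Hp. lra.
Qed.

Definition aP : R -> R := fun _ => 1.
Definition bP : R -> R := fun x => x.
Definition aQ : R -> R := legendreQ0.
Definition bQ : R -> R := fun x => x * legendreQ0 x - 1.

Lemma HbaseP : forall x, -1 < x < 1 ->
  is_derive aP x ((fun _ => 0) x) /\ is_derive bP x ((fun _ => 1) x) /\
  (fun _ => 1) x - x * (fun _ => 0) x = aP x /\ x * (fun _ => 1) x - (fun _ => 0) x = bP x.
Proof. intros x _. exact (baseP x). Qed.

Lemma HbaseQ : forall x, -1 < x < 1 ->
  is_derive aQ x ((fun x => / (1 - x*x)) x) /\
  is_derive bQ x ((fun x => legendreQ0 x + x / (1 - x*x)) x) /\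
  (fun x => legendreQ0 x + x / (1 - x*x)) x - x * (fun x => / (1 - x*x)) x = aQ x /\
  x * (fun x => legendreQ0 x + x / (1 - x*x)) x - (fun x => / (1 - x*x)) x = bQ x.
Proof. intros x Hx. exact (baseQ x Hx). Qed.

Lemma u0_eq n t : u0 (S n) t = Ym aP bP n t.
Proof. reflexivity. Qed.
Lemma v0_eq n t : v0 (S n) t = Ym aQ bQ n t.
Proof. reflexivity. Qed.

Lemma wronsk n t : Ym aP bP n t * Pm aQ bQ n t - Ym aQ bQ n t * Pm aP bP n t = - / 2.
Proof.
unfold Ym, Pm.
set (fP := fst (legendre_pair aP bP n (cos t))) in *.
set (sP := snd (legendre_pair aP bP n (cos t))) in *.
set (fQ := fst (legendre_pair aQ bQ n (cos t))) in *.
set (sQ := snd (legendre_pair aQ bQ n (cos t))) in *.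
assert (C : (INR n + 1) * (sP * fQ - fP * sQ) = 1) by exact (casorati n (cos t)).
assert (S2 : sqrt 2 * sqrt 2 = 2) by (apply sqrt_sqrt; lra).
assert (S0 : sqrt 2 <> 0) by (apply Rgt_not_eq, sqrt_lt_R0; lra).
transitivity (- ((INR n + 1) * (sP * fQ - fP * sQ)) / (sqrt 2 * sqrt 2)).
- field. exact S0.
- rewrite C, S2. field.
Qed.

Lemma mode_om (a b da db : R -> R) (Hb : forall x, -1 < x < 1 ->
  is_derive a x (da x) /\ is_derive b x (db x) /\
  db x - x * da x = a x /\ x * db x - da x = b x) (n : nat) :
  (forall t, 0 < t < PI -> is_derive (Ym a b n) t (Pm a b n t / sin t)) /\
  (forall t, 0 < t < PI -> is_derive (Pm a b n) t (- ((INR n + 3/2) ^ 2 - / 4) * sin t * Ym a b n t)).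
Proof.
split; intros t Ht; destruct (mode_t a b da db Hb n t Ht) as [H1 H2]; [exact H1|].
replace (- ((INR n + 3/2) ^ 2 - / 4)) with (- ((INR n + 1) * (INR n + 2))) by field. exact H2.
Qed.

Lemma sin_PI10_le : sin (PI / 10) <= / 2.
Proof. pose proof PI_RGT_0. rewrite <- (Rmult_1_l (/ 2)), <- Rdiv_def, <- sin_PI6. apply sin_incr_1; lra. Qed.

Lemma term_lb (rho nu : R) (n : nat) : 0 < rho ->
  1 <= INR n + 3/2 -> 200 * Mq * exp Mq <= INR n + 3/2 ->
  cos (ph (INR n + 3/2) (PI/10)) = -1 -> sin (ph (INR n + 3/2) (PI/10)) = 0 ->
  / 20 <= Cmod (beta (ymode rho nu (S n)) (PI/10) (PI/2)) ^ 2.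
Proof.
intros Hrho Hom1 Hbig Hc Hs.
set (om := INR n + 3/2) in *.
destruct (mode_om aP bP _ _ HbaseP n) as [HYu HPu].
destruct (mode_om aQ bQ _ _ HbaseQ n) as [HYv HPv].
fold om in HYu, HPu, HYv, HPv.
set (u := Ym aP bP n) in *. set (pu := Pm aP bP n) in *.
set (v := Ym aQ bQ n) in *. set (pv := Pm aQ bQ n) in *.
assert (Hy : forall t, ymode rho nu (S n) t = (rho * u t + nu * v t, / rho * v t)).
{ intro t. rewrite (surjective_pairing (ymode rho nu (S n) t)), ymode_fst, ymode_snd. reflexivity. }
assert (Hd : forall t, 0 < t < PI -> Cderiv (ymode rho nu (S n)) t = ((rho * pu t + nu * pv t) / sin t, (/ rho * pv t) / sin t)).
{ intros t Ht. unfold Cderiv. f_equal.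
  - rewrite (Derive_ext _ (fun s => rho * u s + nu * v s)) by (intro; rewrite ymode_fst; reflexivity).
    apply is_derive_unique. destruct (lin_sol u pu v pv om rho nu HYu HPu HYv HPv) as [A _]. exact (A t Ht).
  - rewrite (Derive_ext _ (fun s => 0 * u s + / rho * v s)) by (intro; rewrite ymode_snd, Rmult_0_l, Rplus_0_l; reflexivity).
    apply is_derive_unique. destruct (lin_sol u pu v pv om 0 (/ rho) HYu HPu HYv HPv) as [A _].
    replace (/ rho * pv t / sin t) with ((0 * pu t + / rho * pv t) / sin t) by (unfold Rdiv; ring). exact (A t Ht). }
pose proof PI_RGT_0 as HPI.
assert (H2 : 0 < PI / 2 < PI) by lra. assert (H10 : 0 < PI / 10 < PI) by lra.
assert (S2 : sin (PI / 2) <> 0) by (rewrite sin_PI2; lra).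
assert (S10 : sin (PI / 10) <> 0) by (apply Rgt_not_eq; exact sin_PI10_pos).
rewrite (beta_sq _ (PI/10) (PI/2) _ _ _ _ _ _ _ _ S2 S10 (Hy (PI/2)) (Hy (PI/10)) (Hd _ H2) (Hd _ H10)).
assert (Hr0 : rho <> 0) by lra.
eapply Rle_trans; [|apply (key_ineq rho nu (u (PI/2)) (pu (PI/2)) (v (PI/2)) (pv (PI/2)) (u (PI/10)) (pu (PI/10)) (v (PI/10)) (pv (PI/10)) Hr0)].
assert (K2 : u (PI/2) * pv (PI/2) - v (PI/2) * pu (PI/2) = - / 2) by apply wronsk.
assert (K10 : u (PI/10) * pv (PI/10) - v (PI/10) * pu (PI/10) = - / 2) by apply wronsk.
rewrite K2, K10.
assert (HK : u (PI/2) * pv (PI/2) - v (PI/2) * pu (PI/2) <> 0) by (rewrite K2; lra).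
pose proof (trace_bound u pu v pv om Hom1 HYu HPu HYv HPv Hc Hs HK) as TB. simpl in TB.
rewrite K2 in TB.
set (T := pv (PI / 2) * u (PI / 10) - pu (PI / 2) * v (PI / 10) - v (PI / 2) * pu (PI / 10) + u (PI / 2) * pv (PI / 10)) in *.
set (r := sqrt (sin (PI / 10))) in *.
pose proof sin_PI10_pos as Hs1. pose proof sin_PI10_le as Hs2.
assert (Hr : 0 < r) by (unfold r; apply sqrt_lt_R0; exact Hs1).
assert (Er : sin (PI/10) = r * r) by (unfold r; rewrite sqrt_sqrt; lra).
set (D := 2 * Mq * exp Mq) in *.
assert (HD : 0 < D) by (unfold D; pose proof Mq_pos; pose proof (exp_pos Mq); nra).
set (A := / r + r).
assert (HA : 0 < A) by (unfold A; pose proof (Rinv_0_lt_compat r Hr); lra).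
assert (HA2 : 9 / 2 <= A * A).
{ unfold A. replace ((/ r + r) * (/ r + r)) with (/ (r * r) + 2 + r * r) by (field; lra).
  rewrite <- Er. set (s := sin (PI / 10)) in *.
  assert (s * s - 5/2 * s + 1 >= 0) by (assert (0 <= (2 - s) * (/2 - s)) by (apply Rmult_le_pos; lra); nra).
  assert (/ s + s >= 5 / 2).
  { assert (Eq : / s + s - 5 / 2 = (s * s - 5 / 2 * s + 1) * / s) by (field; lra).
    assert (0 <= (s * s - 5 / 2 * s + 1) * / s) by (apply Rmult_le_pos; [lra | apply Rlt_le, Rinv_0_lt_compat; lra]).
    lra. }
  lra. }
assert (Htr : T / - / 2 <= - (49 / 50) * A).
{ apply Rle_trans with (1 := TB). fold A.
  assert (E1 : D * (2 / r + r) / om <= 2 * D * A / om).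
  { unfold Rdiv. apply Rmult_le_compat_r; [apply Rlt_le, Rinv_0_lt_compat; lra|].
    unfold A. pose proof (Rinv_0_lt_compat r Hr). nra. }
  assert (E2 : 2 * D * A / om <= A / 50).
  { apply Rmult_le_reg_r with om; [lra|]. unfold Rdiv. rewrite Rmult_assoc, Rinv_l by lra.
    replace (200 * Mq * exp Mq) with (100 * D) in Hbig by (unfold D; ring). nra. }
  lra. }
set (tr := T / - / 2) in *.
assert (ET : T = - / 2 * tr) by (unfold tr; field).
rewrite ET.
assert (tr * tr >= (49/50 * A) * (49/50 * A)) by nra.
nra.
Qed.

Lemma phase (j : nat) :
  cos (ph (INR (5 * j + 1) + 3/2) (PI/10)) = -1 /\ sin (ph (INR (5 * j + 1) + 3/2) (PI/10)) = 0.
Proof.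
assert (E : ph (INR (5 * j + 1) + 3/2) (PI/10) = - (PI + 2 * INR j * PI)).
{ unfold ph. rewrite plus_INR, mult_INR. simpl (INR 5). simpl (INR 1). field. }
rewrite E, cos_neg, sin_neg, cos_period, sin_period, cos_PI, sin_PI. split; ring.
Qed.

Theorem mainTheorem8 :
  ~ (exists (rho nu : nat -> R),
       (forall l : nat, 0 < rho l) /\
       (forall t0 t1 : R, 0 < t0 < PI -> 0 < t1 < PI ->
          ex_series (fun l : nat =>
            (Cmod (beta (ymode (rho l) (nu l) l) t1 t0)) ^ 2))).
Proof.
intros [rho [nu [Hpos Hser]]].
pose proof PI_RGT_0 as HPI.
assert (H2 : 0 < PI / 2 < PI) by lra. assert (H10 : 0 < PI / 10 < PI) by lra.
pose proof (ex_series_lim_0 _ (Hser (PI/2) (PI/10) H2 H10)) as L.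
apply is_lim_seq_spec in L.
assert (Heps : 0 < / 20) by lra.
destruct (L (mkposreal (/ 20) Heps)) as [N HN].
destruct (nat_unbounded (200 * Mq * exp Mq)) as [M HM].
set (j := (N + M)%nat).
set (n := (5 * j + 1)%nat).
assert (HnN : (N <= S n)%nat) by (unfold n, j; lia).
specialize (HN (S n) HnN). change (pos (mkposreal (/ 20) Heps)) with (/ 20) in HN.
destruct (phase j) as [Hc Hs]. fold n in Hc, Hs.
assert (HMn : INR M <= INR n) by (apply le_INR; unfold n, j; lia).
pose proof (pos_INR n).
pose proof (term_lb (rho (S n)) (nu (S n)) n (Hpos (S n)) ltac:(lra) ltac:(lra) Hc Hs) as T.
rewrite Rminus_0_r in HN.
pose proof (Rle_abs (Cmod (beta (ymode (rho (S n)) (nu (S n)) (S n)) (PI / 10) (PI / 2)) ^ 2)).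
lra.
Qed.
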